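(* Let $2\le n<m$ and $Q=\sum_{i\in[m]}q_i\mathrm B(\sigma_i)\in\mathbb B_m^*$ with all $q_i>0$ and $0\le\sigma_1<\cdots<\sigma_m\le1/2$. Let $W=D_Q(i_2,\dots,i_n;s_2,\dots,s_n)$ and $W'=D_Q(i'_2,\dots,i'_n;s'_2,\dots,s'_n)$ be $2n$-P$^*$-degradations of $Q$ such that the number of indices $j\in\{2,\dots,n\}$ with $(i_j,s_j)\neq(i'_j,s'_j)$ is at most two. If $W\preccurlyeq W'$, then $W\cong W'$. (That is, no $2n$-P$^*$-degradation strictly upgrading $W$ can be obtained by changing at most two splitting patterns of $W$.)
   Context: A BIDMC $W$ has input uniform on $\{0,1\}$, discrete output alphabet $\mathcal Y$ and transition probabilities $\Pr(y\mid x)$; its LR-profile is $P_W(\varepsilon)=\Pr\big(\mathcal L_W(y)=\varepsilon/(1-\varepsilon)\big)$ with $\mathcal L_W(\hat y)=\Pr(y=\hat y\mid x=0)/\Pr(y=\hat y\mid x=1)$, and $W\cong W'$ if LR-profiles coincide; channel identities are up to $\cong$. $W'\preccurlyeq W$ if there is a channel $T$ from the output alphabet of $W$ to that of $W'$ with $\Pr(y'\mid x'=a)=\sum_{y}\Pr(y\mid x=a)T(y'\mid y)$. $\mathrm B(\varepsilon)$ is the BSC with crossover probability $\varepsilon$; $\sum_iq_iW_i$ denotes the random switching channel (use $W_i$ with probability $q_i$ independently of the input and output the index $i$ along with the output). $\mathbb B_n$ is the set of BIDMCs equivalent to $\sum_{i\in[n]}p_i\mathrm B(\varepsilon_i)$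 for a probability vector $(p_i)$ and $\varepsilon_i\in[0,1]$; $\mathbb B_n^*=\mathbb B_n\setminus\mathbb B_{n-1}$. $P_\epsilon(W)=\frac12\sum_{y}\min\{\Pr(y\mid x=0),\Pr(y\mid x=1)\}$. For a symmetric BIDMC $Q$ and $n\ge1$, $W$ is a $2n$-P-degradation of $Q$ if $W\in\mathbb B_n$, $W\preccurlyeq Q$ and $P_\epsilon(W)=\min\{P_\epsilon(W'):W'\in\mathbb B_n,\ W'\preccurlyeq Q\}$. Construction of $D_Q$: for $Q$ as in the claim, put $q_0=q_{m+1}=0$. Given integers $1\le i_2<\cdots<i_n\le m$ and reals $s_j\in[0,q_{i_j}]$, set $i_1=0$, $s_1=0$, $i_{n+1}=m+1$, $s_{n+1}=0$, and for $j\in[n]$ $$p_j=s_j+(q_{i_{j+1}}-s_{j+1})+\sum_{i_j<i<i_{j+1}}q_i,\qquad p_j\varepsilon_j=s_j\sigma_{i_j}+(q_{i_{j+1}}-s_{j+1})\sigma_{i_{j+1}}+\sum_{i_j<i<i_{j+1}}q_i\sigma_i$$ (terms with weight $0$ contribute $0$). Then $D_Q(i_2,\dots,i_n;s_2,\dots,s_n)=\sum_{j\in[n]:p_j>0}p_j\mathrm B(\varepsilon_j)$; the pairs $(i_j,s_j)$ are its splitting patterns. Such a channel is a $2n$-P$^*$-degradation of $Q$ if (i) all $p_j>0$ and $0\le\varepsilon_1<\cdots<\varepsilon_n\le1/2$; (ii) it is a $2n$-P-degradation of $Q$; (iii) for every $j\in[n]$ with $i_{j+1}=i_j+1$: if $s_j=0$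 then $s_{j+1}=0$, and if $s_{j+1}=q_{i_{j+1}}$ then $s_j=q_{i_j}$. *)

(* Defs.v *)
From HB Require Import structures.
From mathcomp Require Import all_boot all_order all_algebra.
From mathcomp Require Import reals.
Set Implicit Arguments. Unset Strict Implicit. Unset Printing Implicit Defensive.
Import Order.TTheory GRing.Theory Num.Theory.
Local Open Scope ring_scope.

(* A binary-input channel with finite output alphabet [out];
   input 0 is [false], input 1 is [true]; tr x y = Pr(y | x). *)
Record chan (R : realType) := Chan { out : finType; tr : bool -> out -> R }.
Arguments out {R} c.
Arguments tr {R} c _ _.
Arguments Chan {R} out tr.

Section Channels.
Variable R : realType.

Definition valid (W : chan R) : Prop :=
  (forall x y, 0 <= tr W x y) /\ (forall x, \sum_y tr W x y = 1).

(* L_W(y) = W(y|0)/W(y|1) = e/(1-e) is written cross-multiplied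
   (W(y|0)(1-e) = W(y|1) e), which also covers the cases 0 and +oo;
   outputs of probability 0 (where it holds trivially) contribute 0. *)
Definition LRprofile (W : chan R) (e : R) : R :=
  \sum_(y | tr W false y * (1 - e) == tr W true y * e)
     (tr W false y + tr W true y) / 2.

Definition cong (W W' : chan R) : Prop :=
  forall e, 0 <= e <= 1 -> LRprofile W e = LRprofile W' e.

Definition degr (W' W : chan R) : Prop :=
  exists T : out W -> out W' -> R,
    (forall y y', 0 <= T y y') /\ (forall y, \sum_y' T y y' = 1) /\
    (forall a y', tr W' a y' = \sum_y tr W a y * T y y').

Definition Perr (W : chan R) : R :=
  (1 / 2) * \sum_y Num.min (tr W false y) (tr W true y).

Definition bsc (e : R) (x y : bool) : R := if y == x then 1 - e else e.

Definition switch (I : finType) (p eps : I -> R) : chan R :=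
  @Chan R (I * bool)%type (fun x yb => p yb.1 * bsc (eps yb.1) x yb.2).

Definition inB (n : nat) (W : chan R) : Prop :=
  exists p eps : 'I_n -> R,
    (forall i, 0 <= p i) /\ \sum_i p i = 1 /\ (forall i, 0 <= eps i <= 1) /\
    cong W (switch p eps).

Definition inBstar (n : nat) (W : chan R) : Prop := inB n W /\ ~ inB n.-1 W.

Definition isPdeg (n : nat) (Q W : chan R) : Prop :=
  valid W /\ inB n W /\ degr W Q /\
  forall W', valid W' -> inB n W' -> degr W' Q -> Perr W <= Perr W'.

(* Q = sum_{i in [m]} q_i B(sigma_i), with q, sigma : nat -> R indexed 1..m. *)
Definition Qchan (m : nat) (q sigma : nat -> R) : chan R :=
  @switch 'I_m (fun i => q i.+1) (fun i => sigma i.+1).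

(* Extended data of the construction D_Q, with indices j in 1..n+1. *)
Definition qe (m : nat) (q : nat -> R) (i : nat) : R :=
  if (1 <= i <= m)%N then q i else 0.
Definition ie (n m : nat) (ii : nat -> nat) (j : nat) : nat :=
  if j == 1%N then 0%N else if j == n.+1 then m.+1 else ii j.
Definition se (n : nat) (s : nat -> R) (j : nat) : R :=
  if (j == 1%N) || (j == n.+1) then 0 else s j.

Definition DQp (n m : nat) (q : nat -> R) (ii : nat -> nat) (s : nat -> R) (j : nat) : R :=
  se n s j + (qe m q (ie n m ii j.+1) - se n s j.+1)
  + \sum_((ie n m ii j).+1 <= i < ie n m ii j.+1) qe m q i.

Definition DQpe (n m : nat) (q sigma : nat -> R) (ii : nat -> nat) (s : nat -> R)
  (j : nat) : R :=
  se n s j * sigma (ie n m ii j)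
  + (qe m q (ie n m ii j.+1) - se n s j.+1) * sigma (ie n m ii j.+1)
  + \sum_((ie n m ii j).+1 <= i < ie n m ii j.+1) qe m q i * sigma i.

Definition DQeps (n m : nat) (q sigma : nat -> R) (ii : nat -> nat) (s : nat -> R)
  (j : nat) : R :=
  DQpe n m q sigma ii s j / DQp n m q ii s j.

(* D_Q(i_2..i_n; s_2..s_n) = sum_{j in [n], p_j > 0} p_j B(eps_j);
   index j : 'I_n stands for j+1 in [n]. *)
Definition DQ (n m : nat) (q sigma : nat -> R) (ii : nat -> nat) (s : nat -> R)
  : chan R :=
  @switch {j : 'I_n | 0 < DQp n m q ii s j.+1}
    (fun j => DQp n m q ii s (val j).+1)
    (fun j => DQeps n m q sigma ii s (val j).+1).

Definition pattern_ok (n m : nat) (q : nat -> R) (ii : nat -> nat) (s : nat -> R)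
  : Prop :=
  (forall j, (2 <= j <= n)%N -> (1 <= ii j <= m)%N) /\
  (forall j, (2 <= j < n)%N -> (ii j < ii j.+1)%N) /\
  (forall j, (2 <= j <= n)%N -> 0 <= s j <= q (ii j)).

Definition isPstar (n m : nat) (q sigma : nat -> R) (ii : nat -> nat) (s : nat -> R)
  : Prop :=
  ((forall j, (1 <= j <= n)%N -> 0 < DQp n m q ii s j) /\
   0 <= DQeps n m q sigma ii s 1 /\
   (forall j, (1 <= j < n)%N ->
      DQeps n m q sigma ii s j < DQeps n m q sigma ii s j.+1) /\
   DQeps n m q sigma ii s n <= 1 / 2) /\
  isPdeg n (Qchan m q sigma) (DQ n m q sigma ii s) /\
  (forall j, (1 <= j <= n)%N -> ie n m ii j.+1 = (ie n m ii j).+1 ->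
     (se n s j = 0 -> se n s j.+1 = 0) /\
     (se n s j.+1 = qe m q (ie n m ii j.+1) -> se n s j = qe m q (ie n m ii j))).

End Channels.

(* Main.v *)
Require Import Defs.
From HB Require Import structures.
From mathcomp Require Import all_boot all_order all_algebra.
From mathcomp Require Import reals.
From mathcomp Require Import ring lra zify.
Import Order.TTheory GRing.Theory Num.Theory.
Local Open Scope ring_scope.
Set Implicit Arguments. Unset Strict Implicit. Unset Printing Implicit Defensive.
Definition Kf (R : realType) (V : chan R) (t : R) : R :=
  \sum_y Num.min ((1 - t) * tr V true y) (t * tr V false y).

Lemma sum_min_le (R : realType) (I : finType) (A B : I -> R) :
  \sum_i Num.min (A i) (B i) <= Num.min (\sum_i A i) (\sum_i B i).
Proof.
rewrite le_min; apply/andP; split; apply: ler_sum => i _; rewrite ge_min lexx ?orbT //.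
Qed.

Lemma degr_K (R : realType) (W V : chan R) t : 0 <= t <= 1 -> degr W V -> Kf V t <= Kf W t.
Proof.
move=> /andP [t0 t1] [T [T0 [T1 TW]]].
rewrite /Kf.
have E : \sum_y Num.min ((1 - t) * tr V true y) (t * tr V false y) =
   \sum_y' \sum_y T y y' * Num.min ((1 - t) * tr V true y) (t * tr V false y).
  rewrite exchange_big /=; apply: eq_bigr => y _; by rewrite -mulr_suml T1 mul1r.
rewrite E; apply: ler_sum => y' _.
rewrite !TW !mulr_sumr.
apply: le_trans (sum_min_le _ _); apply: ler_sum => y _.
rewrite minr_pMr //.
have -> : T y y' * ((1 - t) * tr V true y) = (1 - t) * (tr V true y * T y y') by ring.
have -> : T y y' * (t * tr V false y) = t * (tr V false y * T y y') by ring.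
done.
Qed.

Lemma sum_sig_bool (R : realType) (n : nat) (P : pred 'I_n) (hP : forall j, P j)
  (G : 'I_n -> bool -> R) :
  \sum_(y : {j : 'I_n | P j} * bool) G (val y.1) y.2 = \sum_(j < n) (G j true + G j false).
Proof.
rewrite -(pair_bigA _ (fun a b => G (val a) b)) /=.
have -> : \sum_(a : {j : 'I_n | P j}) \sum_(b : bool) G (val a) b =
          \sum_(a : {j : 'I_n | P j}) (G (val a) true + G (val a) false).
  by apply: eq_bigr => a _; rewrite big_bool.
rewrite (reindex (fun j : 'I_n => exist (fun j => P j) j (hP j))) //=.
exists (fun a => val a) => //= a _; apply: val_inj => //.
Qed.

Lemma bsc_min (R : realType) (p e t : R) : 0 <= p -> 0 <= e <= 1/2 -> 0 <= t <= 1/2 ->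
  Num.min ((1 - t) * (p * bsc e true true)) (t * (p * bsc e false true)) +
  Num.min ((1 - t) * (p * bsc e true false)) (t * (p * bsc e false false)) = p * Num.min e t.
Proof.
move=> p0 /andP [e0 e1] /andP [t0 t1]; rewrite /bsc /=.
have -> : (1 - t) * (p * (1 - e)) = p * ((1 - t) * (1 - e)) by ring.
have -> : t * (p * e) = p * (t * e) by ring.
have -> : (1 - t) * (p * e) = p * ((1 - t) * e) by ring.
have -> : t * (p * (1 - e)) = p * (t * (1 - e)) by ring.
rewrite -!minr_pMr // -mulrDr; congr (_ * _).
have -> : (1 - t) * (1 - e) = 1 - t - e + t * e by ring.
have -> : (1 - t) * e = e - t * e by ring.
have -> : t * (1 - e) = t - t * e by ring.
case: (leP (1 - t - e + t * e) (t * e)); case: (leP (e - t * e) (t - t * e)); case: (leP e t); lra.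
Qed.
Lemma clamp_mono (R : realType) (u v a b : R) : u <= v -> a <= b ->
  0 <= (Num.min v b - Num.min v a) - (Num.min u b - Num.min u a).
Proof. move=> uv ab; case: (leP v b); case: (leP v a); case: (leP u b); case: (leP u a); lra. Qed.

Definition Sf (R : realType) (f : nat -> R) (i : nat) := \sum_(0 <= l < i.+1) f l.

Lemma Sf_S (R : realType) (f : nat -> R) i : Sf f i.+1 = Sf f i + f i.+1.
Proof. by rewrite /Sf big_nat_recr. Qed.

Lemma Sf_diff (R : realType) (f : nat -> R) a b : (a < b)%N ->
  Sf f b - Sf f a = \sum_(a.+1 <= l < b) f l + f b.
Proof.
move=> ab; rewrite /Sf (big_cat_nat _ (n:=a.+1)) //=; last by rewrite ltnS ltnW.
rewrite (big_nat_recr b) //=; lra.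
Qed.

Section Part1.
Variable R : realType.
Variables (m : nat) (q sigma : nat -> R).
Hypothesis m_gt0 : (0 < m)%N.
Hypothesis qpos : forall i, (1 <= i <= m)%N -> 0 < q i.
Hypothesis qsum : \sum_(i < m) q i.+1 = 1.
Hypothesis sinc : forall i, (1 <= i < m)%N -> sigma i < sigma i.+1.

Definition Cq := Sf (qe m q).
Definition Gq := Sf (fun l => qe m q l * sigma l).
Definition Lam (x : R) :=
  \sum_(0 <= k < m) sigma k.+1 * (Num.min x (Cq k.+1) - Num.min x (Cq k)).

Lemma qe_ge0 i : 0 <= qe m q i.
Proof. rewrite /qe; case: ifP => // /qpos h; exact: ltW. Qed.

Lemma qe0 : qe m q 0 = 0.
Proof. by rewrite /qe. Qed.

Lemma qeS : qe m q m.+1 = 0.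
Proof. by rewrite /qe ltnn andbF. Qed.

Lemma qe_pos i : (1 <= i <= m)%N -> 0 < qe m q i.
Proof. by move=> h; rewrite /qe h; apply: qpos. Qed.

Lemma Cq0 : Cq 0 = 0.
Proof. by rewrite /Cq /Sf big_nat1 qe0. Qed.

Lemma CqS i : Cq i.+1 = Cq i + qe m q i.+1.
Proof. exact: Sf_S. Qed.

Lemma Cq_mono i j : (i <= j)%N -> Cq i <= Cq j.
Proof.
elim: j => [|j IH]; first by rewrite leqn0 => /eqP ->.
rewrite leq_eqVlt => /orP [/eqP -> //|]; rewrite ltnS => /IH h.
rewrite CqS; have := qe_ge0 j.+1; lra.
Qed.

Lemma Cq_strict i j : (i < j)%N -> (j <= m)%N -> Cq i < Cq j.
Proof.
case: j => // j ij jm; rewrite CqS.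
have h1 : Cq i <= Cq j by apply: Cq_mono.
 have h2 : 0 < qe m q j.+1 by apply: qe_pos; rewrite jm.
lra.
Qed.

Lemma Cqm : Cq m = 1.
Proof.
rewrite /Cq /Sf big_ltn // qe0 add0r big_add1 /= -qsum big_mkord.
by apply: eq_bigr => i _; rewrite /qe /= ltn_ord.
Qed.

Lemma CqS1 : Cq m.+1 = 1.
Proof. by rewrite CqS qeS Cqm addr0. Qed.

Lemma Cq_pred i : Cq i.-1 = Cq i - qe m q i.
Proof. case: i => [|i]; first by rewrite Cq0 qe0; lra. by rewrite CqS /=; lra. Qed.

Lemma Cq_le1 i : (i <= m.+1)%N -> Cq i <= 1.
Proof. move=> h; rewrite -CqS1; exact: Cq_mono. Qed.

Lemma Cq_ge0 i : 0 <= Cq i.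
Proof. rewrite -Cq0; exact: Cq_mono. Qed.

Lemma sigma_mono i j : (1 <= i)%N -> (i <= j)%N -> (j <= m)%N -> sigma i <= sigma j.
Proof.
move=> i1; elim: j => [|j IH]; first by rewrite leqn0 => /eqP ->.
rewrite leq_eqVlt => /orP [/eqP -> //|]; rewrite ltnS => ij jm.
have := IH ij (ltnW jm); have := sinc (i:=j); rewrite jm (leq_trans i1 ij) /= => h.
have {}h := h isT; lra.
Qed.

Lemma sum_clamp x : 0 <= x <= 1 ->
  \sum_(0 <= k < m) (Num.min x (Cq k.+1) - Num.min x (Cq k)) = x.
Proof.
move=> /andP [x0 x1]; rewrite telescope_sumr // Cqm Cq0.
case: (leP x 1); case: (leP x 0); lra.
Qed.

Lemma Lam_up x y a : 0 <= x -> x <= y -> (1 <= a <= m)%N -> y <= Cq a ->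
  Lam y - Lam x <= sigma a * (y - x).
Proof.
move=> x0 xy /andP [a1 am] ya.
have y1 : y <= 1 by have := Cq_le1 (i:=a); rewrite ltnW ?ltnS //; lra.
have Sy := sum_clamp (x:=y); have Sx := sum_clamp (x:=x).
have E : sigma a * (y - x) = \sum_(0 <= k < m) sigma a *
   ((Num.min y (Cq k.+1) - Num.min y (Cq k)) - (Num.min x (Cq k.+1) - Num.min x (Cq k))).
  rewrite -mulr_sumr sumrB Sy ?Sx //; apply/andP; split; lra.
rewrite E /Lam -sumrB; apply: ler_sum_nat => k /andP [_ kltm].
rewrite -mulrBr.
have d0 := clamp_mono (a:=Cq k) (b:=Cq k.+1) xy.
have hk := Cq_mono (leqnSn k).
case: (ltnP k a) => ka.
  apply: ler_wpM2r; first exact: d0.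
  exact: (sigma_mono (i:=k.+1) (j:=a) isT ka am).
have hka : y <= Cq k by have := Cq_mono ka; lra.
have -> : Num.min y (Cq k.+1) - Num.min y (Cq k) - (Num.min x (Cq k.+1) - Num.min x (Cq k)) = 0.
  case: (leP y (Cq k)); case: (leP y (Cq k.+1)); case: (leP x (Cq k)); case: (leP x (Cq k.+1)); lra.
by rewrite !mulr0.
Qed.

Lemma Lam_lo y z a : y <= z -> z <= 1 -> (1 <= a <= m)%N -> Cq a.-1 <= y ->
  sigma a * (z - y) <= Lam z - Lam y.
Proof.
move=> yz z1 /andP [a1 am] ay.
have y0 : 0 <= y by have := Cq_ge0 a.-1; lra.
have Sy := sum_clamp (x:=y); have Sz := sum_clamp (x:=z).
have E : sigma a * (z - y) = \sum_(0 <= k < m) sigma a *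
   ((Num.min z (Cq k.+1) - Num.min z (Cq k)) - (Num.min y (Cq k.+1) - Num.min y (Cq k))).
  rewrite -mulr_sumr sumrB Sy ?Sz //; apply/andP; split; lra.
rewrite E /Lam -sumrB; apply: ler_sum_nat => k /andP [_ kltm].
rewrite -mulrBr.
have d0 := clamp_mono (a:=Cq k) (b:=Cq k.+1) yz.
have hk := Cq_mono (leqnSn k).
case: (ltnP k a.-1) => ka.
  have hka : Cq k.+1 <= y by have := Cq_mono ka; lra.
  have -> : Num.min z (Cq k.+1) - Num.min z (Cq k) - (Num.min y (Cq k.+1) - Num.min y (Cq k)) = 0.
    case: (leP y (Cq k)); case: (leP y (Cq k.+1)); case: (leP z (Cq k)); case: (leP z (Cq k.+1)); lra.
  by rewrite !mulr0.
case: (leqP k.+1 m) => km.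
  apply: ler_wpM2r; first exact: d0.
  apply: (sigma_mono (i:=a) (j:=k.+1) a1 _ km); lia.
have : Cq k.+1 = Cq k.
  have -> : k = m by lia.
  by rewrite CqS1 Cqm.
move=> ->. rewrite !subrr mulr0; lra.
Qed.


Lemma Gq0 : Gq 0 = 0.
Proof. by rewrite /Gq /Sf big_nat1 qe0 mul0r. Qed.

Lemma GqS i : Gq i.+1 = Gq i + qe m q i.+1 * sigma i.+1.
Proof. exact: Sf_S. Qed.

Lemma LamI j x : (j < m)%N -> Cq j <= x <= Cq j.+1 ->
  Lam x = Gq j + sigma j.+1 * (x - Cq j).
Proof.
move=> jm /andP [x1 x2].
rewrite /Lam (big_cat_nat _ (n:=j)) //=; last exact: ltnW.
rewrite (big_ltn (m:=j)) //=.
have -> : \sum_(j.+1 <= i < m) sigma i.+1 * (Num.min x (Cq i.+1) - Num.min x (Cq i)) = 0.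
  rewrite big_nat big1 // => k /andP [jk km].
  have : x <= Cq k by have := Cq_mono jk; lra.
  have := Cq_mono (leqnSn k).
  case: (leP x (Cq k)); case: (leP x (Cq k.+1)); try lra; by rewrite subrr mulr0.
have -> : \sum_(0 <= i < j) sigma i.+1 * (Num.min x (Cq i.+1) - Num.min x (Cq i))
    = \sum_(0 <= i < j) qe m q i.+1 * sigma i.+1.
  rewrite !big_nat; apply: eq_bigr => k /andP [_ kj].
  have : Cq k.+1 <= x by have := Cq_mono kj; lra.
  have := Cq_mono (leqnSn k).
  move=> h2 h1; rewrite (min_r h1) (min_r (le_trans h2 h1)) CqS; ring.
have -> : Gq j = \sum_(0 <= i < j) qe m q i.+1 * sigma i.+1.
  by rewrite /Gq /Sf big_nat_recl // qe0 mul0r add0r.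
rewrite (min_l x2) (min_r x1); ring.
Qed.

Lemma LamG i s : (i <= m.+1)%N -> 0 <= s <= qe m q i ->
  Lam (Cq i - s) = Gq i - s * sigma i.
Proof.
move=> im /andP [s0 s1].
case: i im s0 s1 => [|i] im s0 s1.
  have -> : s = 0 by rewrite qe0 in s1; lra.
  rewrite Cq0 Gq0 subr0 mul0r subr0.
  rewrite (LamI (j:=0)) //; first by rewrite Gq0 Cq0; ring.
  rewrite CqS Cq0; have := qe_ge0 1; move=> h; apply/andP; split; lra.
case: (ltnP i m) => im'.
  rewrite (LamI (j:=i)) //; first by rewrite GqS CqS; lra.
  rewrite CqS; apply/andP; split; lra.
have e : i = m by lia.
subst i.
have -> : s = 0 by rewrite qeS in s1; lra.
rewrite CqS1 GqS qeS !mul0r !addr0 !subr0.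
have e1 : m.-1.+1 = m := prednK m_gt0.
have mm : (m.-1 < m)%N by lia.
rewrite (LamI (j:=m.-1)) // ?e1; last by rewrite ?e1 Cqm lexx andbT; apply: Cq_le1; lia.
have := GqS m.-1; have := CqS m.-1; rewrite e1 Cqm => h1 h2; rewrite h2.
have -> : qe m q m = 1 - Cq m.-1 by lra.
ring.
Qed.

Lemma atom_of y : 0 < y <= 1 -> exists a, (1 <= a <= m)%N /\ Cq a.-1 < y <= Cq a.
Proof.
move=> /andP [y0 y1].
suff: forall k, (k <= m)%N -> y <= Cq k -> exists a, (1 <= a <= k)%N /\ Cq a.-1 < y <= Cq a.
  move=> /(_ m (leqnn m)); rewrite Cqm => /(_ y1) [a [/andP [a1 ak] h]].
  by exists a; rewrite a1 ak.
elim => [|k IH] km yk; first by rewrite Cq0 in yk; lra.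
case: (leP y (Cq k)) => h.
  have [a [/andP [a1 ak] ha]] := IH (ltnW km) h.
  by exists a; rewrite a1 /= (leq_trans ak).
by exists k.+1; rewrite /= h yk.
Qed.

Lemma Lam_up_strict x y a : 0 <= x -> x < Cq a.-1 -> Cq a.-1 < y -> (1 <= a <= m)%N -> y <= Cq a ->
  Lam y - Lam x < sigma a * (y - x).
Proof.
move=> x0 xa ay /andP [a1 am] ya.
have a2 : (2 <= a)%N.
  case: a a1 am xa ay ya => [|[|a]] //; rewrite Cq0; lra.
have h1 := Lam_up (x:=Cq a.-1) (y:=y) (a:=a) (Cq_ge0 _) (ltW ay) (introT andP (conj a1 am)) ya.
have h2 := Lam_up (x:=x) (y:=Cq a.-1) (a:=a.-1) x0 (ltW xa).
have h3 : (1 <= a.-1 <= m)%N by lia.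
have {h2} := h2 h3 (lexx _).
have h4 : sigma a.-1 < sigma a.
  have := sinc (i:=a.-1); rewrite prednK ?(ltnW a2) //; apply; lia.
have h5 : 0 < (sigma a - sigma a.-1) * (Cq a.-1 - x) by apply: mulr_gt0; lra.
move=> h2; nra.
Qed.

Lemma Lam_lo_strict y z a : Cq a.-1 <= y -> y <= Cq a -> Cq a < z -> z <= 1 -> (1 <= a <= m)%N ->
  sigma a * (z - y) < Lam z - Lam y.
Proof.
move=> ay ya az z1 /andP [a1 am].
have am' : (a < m)%N.
  case: (ltnP a m) => // ma; have : a = m by lia. move=> e; rewrite e Cqm in az; lra.
have c1 : Cq a <= 1 by apply: Cq_le1; lia.
have h1 := Lam_lo (y:=y) (z:=Cq a) (a:=a) ya c1 (introT andP (conj a1 am)) ay.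
have h2 := Lam_lo (y:=Cq a) (z:=z) (a:=a.+1) (ltW az) z1.
have h3 : (1 <= a.+1 <= m)%N by lia.
have {h2} := h2 h3 (lexx _).
have h4 : sigma a < sigma a.+1 by apply: sinc; lia.
have h5 : 0 < (sigma a.+1 - sigma a) * (z - Cq a) by apply: mulr_gt0; lra.
move=> h2; nra.
Qed.

Lemma AVG x y z : 0 <= x -> x < y -> y < z -> z <= 1 ->
  (Lam z - Lam y) * (y - x) <= (Lam y - Lam x) * (z - y) ->
  exists a, (1 <= a <= m)%N /\ Cq a.-1 <= x /\ z <= Cq a.
Proof.
move=> x0 xy yz z1 H.
have [a [ha /andP [ay ya]]] := atom_of (y:=y) (introT andP (conj (le_lt_trans x0 xy) (ltW (lt_le_trans yz z1)))).
have Lu := Lam_up x0 (ltW xy) ha ya.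
have Ll := Lam_lo (ltW yz) z1 ha (ltW ay).
exists a; split => //; split.
  case: (leP (Cq a.-1) x) => // xa.
  have S := Lam_up_strict x0 xa ay ha ya.
  have p1 : 0 < y - x by lra. have p2 : 0 < z - y by lra.
  have : (Lam y - Lam x) * (z - y) < sigma a * (y - x) * (z - y) by rewrite ltr_pM2r.
  have : sigma a * (z - y) * (y - x) <= (Lam z - Lam y) * (y - x) by rewrite ler_pM2r.
  nra.
case: (leP z (Cq a)) => // za.
have S := Lam_lo_strict (ltW ay) ya za z1 ha.
have p1 : 0 < y - x by lra. have p2 : 0 < z - y by lra.
have : (Lam y - Lam x) * (z - y) <= sigma a * (y - x) * (z - y) by rewrite ler_pM2r.
have : sigma a * (z - y) * (y - x) < (Lam z - Lam y) * (y - x) by rewrite ltr_pM2r.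
nra.
Qed.
Lemma Cq_le_idx u v : (v <= m)%N -> Cq v <= Cq u -> (v <= u)%N.
Proof. move=> vm h; case: (leqP v u) => // uv; have := Cq_strict uv vm; lra. Qed.

Lemma Cq_lt_idx u v : Cq u < Cq v -> (u < v)%N.
Proof. move=> h; case: (ltnP u v) => // vu; have := Cq_mono vu; lra. Qed.

Section Pat.
Variable n : nat.
Variables (ii : nat -> nat) (s : nat -> R).
Hypothesis n2 : (2 <= n)%N.
Hypothesis nm : (n < m)%N.
Hypothesis pok : pattern_ok n m q ii s.
Hypothesis pst : isPstar n m q sigma ii s.

Definition posp j := Cq (ie n m ii j) - se n s j.

Lemma ie1 : ie n m ii 1 = 0%N. Proof. by rewrite /ie eqxx. Qed.
Lemma ien1 : ie n m ii n.+1 = m.+1.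
Proof. rewrite /ie eqxx; case: ifP => // /eqP h; lia. Qed.
Lemma iemid j : (2 <= j <= n)%N -> ie n m ii j = ii j.
Proof. move=> h; rewrite /ie; case: ifP => [/eqP|]; first lia. case: ifP => [/eqP|] //; lia. Qed.
Lemma se1 : se n s 1 = 0. Proof. by rewrite /se eqxx. Qed.
Lemma sen1 : se n s n.+1 = 0. Proof. by rewrite /se eqxx orbT. Qed.
Lemma semid j : (2 <= j <= n)%N -> se n s j = s j.
Proof. move=> h; rewrite /se; case: ifP => [/orP [/eqP|/eqP]|] //; lia. Qed.

Lemma ie_lt j : (1 <= j <= n)%N -> (ie n m ii j < ie n m ii j.+1)%N.
Proof.
case: pok => [h1 [h2 h3]] hj.
have [->|j1] := eqVneq j 1%N.
  rewrite ie1 iemid ?n2 //; have := h1 2%N; rewrite n2 /= => /(_ isT); lia.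
have [->|jn] := eqVneq j n.
  rewrite ien1 iemid; last lia. have := h1 n; rewrite leqnn n2 /= => /(_ isT); lia.
rewrite !iemid; try lia. apply: h2; lia.
Qed.

Lemma ie_le j : (1 <= j <= n.+1)%N -> (ie n m ii j <= m.+1)%N.
Proof.
case: pok => [h1 [h2 h3]] hj.
have [->|j1] := eqVneq j 1%N; first by rewrite ie1.
have [->|jn] := eqVneq j n.+1; first by rewrite ien1.
rewrite iemid; last lia. have := h1 j; lia.
Qed.

Lemma se_bnd j : (1 <= j <= n.+1)%N -> 0 <= se n s j <= qe m q (ie n m ii j).
Proof.
case: pok => [h1 [h2 h3]] hj.
have [->|j1] := eqVneq j 1%N; first by rewrite se1 ie1 qe0 lexx.
have [->|jn] := eqVneq j n.+1; first by rewrite sen1 ien1 qeS lexx.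
have hj' : (2 <= j <= n)%N by lia.
rewrite semid // iemid // /qe.
have := h1 j hj'; move=> ->. exact: h3.
Qed.

Lemma pos_bnd j : (1 <= j <= n.+1)%N ->
  Cq (ie n m ii j).-1 <= posp j <= Cq (ie n m ii j).
Proof.
move=> hj; have := se_bnd hj; rewrite /posp Cq_pred => /andP [a b].
apply/andP; split; lra.
Qed.

Lemma pos01 j : (1 <= j <= n.+1)%N -> 0 <= posp j <= 1.
Proof.
move=> hj; have /andP [a b] := pos_bnd hj.
have := Cq_ge0 (ie n m ii j).-1; have := Cq_le1 (ie_le hj).
move=> c d; apply/andP; split; lra.
Qed.

Lemma pos1 : posp 1 = 0.
Proof. by rewrite /posp ie1 se1 Cq0 subr0. Qed.
Lemma posn1 : posp n.+1 = 1.
Proof. by rewrite /posp ien1 sen1 CqS1 subr0. Qed.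

Lemma DQp_eq j : (1 <= j <= n)%N -> DQp n m q ii s j = posp j.+1 - posp j.
Proof.
move=> hj; rewrite /DQp /posp.
have E := Sf_diff (qe m q) (ie_lt hj); rewrite /Cq; lra.
Qed.

Lemma LamPos j : (1 <= j <= n.+1)%N ->
  Lam (posp j) = Gq (ie n m ii j) - se n s j * sigma (ie n m ii j).
Proof. move=> hj; apply: LamG; [exact: ie_le | exact: se_bnd]. Qed.

Lemma DQpe_eq j : (1 <= j <= n)%N ->
  DQpe n m q sigma ii s j = Lam (posp j.+1) - Lam (posp j).
Proof.
move=> hj; rewrite LamPos ?LamPos; try lia.
rewrite /DQpe.
have E := Sf_diff (fun l => qe m q l * sigma l) (ie_lt hj); rewrite /Gq; lra.
Qed.

Lemma ppos j : (1 <= j <= n)%N -> 0 < DQp n m q ii s j.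
Proof. by case: pst => [[h _] _] /h. Qed.

Lemma pos_inc j : (1 <= j <= n)%N -> posp j < posp j.+1.
Proof. move=> hj; have := ppos hj; rewrite DQp_eq //; lra. Qed.

Lemma pos_mono i j : (1 <= i)%N -> (i <= j)%N -> (j <= n.+1)%N -> posp i <= posp j.
Proof.
move=> i1; elim: j => [|j IH]; first lia.
rewrite leq_eqVlt => /orP [/eqP -> //|]; rewrite ltnS => ij jn.
have := IH ij (ltnW jn); have h : posp j < posp j.+1 by apply: pos_inc; lia.
lra.
Qed.

Lemma eps_mono i j : (1 <= i)%N -> (i <= j)%N -> (j <= n)%N ->
  DQeps n m q sigma ii s i <= DQeps n m q sigma ii s j.
Proof.
case: pst => [[_ [_ [h _]]] _] i1.
elim: j => [|j IH]; first lia.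
rewrite leq_eqVlt => /orP [/eqP -> //|]; rewrite ltnS => ij jn.
have := IH ij (ltnW jn); have := h j; rewrite jn (leq_trans i1 ij) /= => h'.
have {}h' := h' isT; lra.
Qed.

Lemma eps_bnd j : (1 <= j <= n)%N ->
  0 <= DQeps n m q sigma ii s j <= 1 / 2.
Proof.
move=> /andP [j1 jn]; case: pst => [[_ [h0 [_ h1]]] _].
have := eps_mono (leqnn 1) j1 jn; have := eps_mono j1 jn (leqnn n).
move=> a b; apply/andP; split; lra.
Qed.

Lemma block j : (1 <= j <= n)%N ->
  Lam (posp j.+1) - Lam (posp j) = DQeps n m q sigma ii s j * (posp j.+1 - posp j).
Proof.
move=> hj; rewrite -DQpe_eq // -DQp_eq // /DQeps divfK //.
by have := ppos hj; rewrite lt0r => /andP [].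
Qed.

Lemma Bblock l a : (1 <= l <= n)%N -> (1 <= a <= m)%N ->
  Cq a.-1 <= posp l -> posp l.+1 <= Cq a -> posp l = Cq a.-1 /\ posp l.+1 = Cq a.
Proof.
move=> hl ha xa za.
have xz := pos_inc hl.
have iii : ie n m ii l.+1 = (ie n m ii l).+1 ->
     (se n s l = 0 -> se n s l.+1 = 0) /\
     (se n s l.+1 = qe m q (ie n m ii l.+1) -> se n s l = qe m q (ie n m ii l)).
  by case: pst => [_ [_ h]]; apply: h.
have ib := ie_lt hl.
have bm : (ie n m ii l.+1 <= m.+1)%N by apply: ie_le; lia.
have sb : 0 <= se n s l <= qe m q (ie n m ii l) by apply: se_bnd; lia.
have tb : 0 <= se n s l.+1 <= qe m q (ie n m ii l.+1) by apply: se_bnd; lia.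
move: xa za xz iii ib bm sb tb; rewrite /posp.
set i := ie n m ii l; set b := ie n m ii l.+1; set s0 := se n s l; set t := se n s l.+1.
move=> xa za xz iii ib bm /andP [s1 s2] /andP [t1 t2].
have Cp := Cq_pred b; have Cpi := Cq_pred i.
case: (ltnP i.+1 b) => hb.
  have h1 : Cq i.+1 <= Cq b.-1 by apply: Cq_mono; lia.
  have e1 : (a.-1 <= i)%N by apply: Cq_le_idx; [lia | lra].
  have e2 : (i.+1 <= a)%N by apply: Cq_le_idx; [lia | lra].
  have ea : a = i.+1 by lia.
  rewrite ea /= in xa za *; have := CqS i; split; lra.
have hb' : b = i.+1 by lia.
have [iii1 iii2] := iii hb'.
have [s00|s0pos] := eqVneq s0 0.
  have t0 := iii1 s00; rewrite s00 t0 in xa za xz *; rewrite !subr0 in xa za xz *.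
  have bm' : (b <= m)%N.
    case: (leqP b m) => // mb; have bb : b = m.+1 by lia.
    have im : i = m by lia.
    rewrite bb CqS1 im Cqm in xz; lra.
  have e1 : (a.-1 <= i)%N by apply: Cq_le_idx; [lia | lra].
  have e2 : (i.+1 <= a)%N by apply: Cq_le_idx; [lia | rewrite -hb'; lra].
  have ea : a = i.+1 by lia.
  rewrite ea /= in xa za *; rewrite -hb'; split; lra.
have [tq|tq] := eqVneq t (qe m q b).
  have sq := iii2 tq.
  have ex : Cq i - s0 = Cq i.-1 by lra.
  have ez : Cq b - t = Cq i by rewrite hb' CqS -hb'; lra.
  rewrite ex ez in xa za xz *.
  have i1 : (1 <= i)%N by have := Cq_lt_idx xz; lia.
  have e1 : (a.-1 <= i.-1)%N by apply: Cq_le_idx; [lia | lra].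
  have e2 : (i <= a)%N by apply: Cq_le_idx; [lia | lra].
  have ea : a = i by lia.
  rewrite ea in xa za *; split; lra.
have hs : 0 < s0 by rewrite lt0r s0pos.
have ht : t < qe m q b by rewrite lt_neqAle tq.
have g1 : Cq a.-1 < Cq i by lra.
have g2 : Cq i < Cq a by have := CqS i; rewrite -hb'; lra.
have h1 := Cq_lt_idx g1; have h2 := Cq_lt_idx g2; move: h1 h2; clear; lia.
Qed.


Lemma K_DQ t : 0 <= t <= 1/2 ->
  Kf (DQ n m q sigma ii s) t =
  \sum_(1 <= j < n.+1) DQp n m q ii s j * Num.min (DQeps n m q sigma ii s j) t.
Proof.
move=> ht; rewrite /Kf /DQ /switch /=.
have hP : forall j : 'I_n, 0 < DQp n m q ii s j.+1 by move=> j; apply: ppos; have := ltn_ord j; lia.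
rewrite (sum_sig_bool hP (fun j b =>
   Num.min ((1 - t) * (DQp n m q ii s j.+1 * bsc (DQeps n m q sigma ii s j.+1) true b))
           (t * (DQp n m q ii s j.+1 * bsc (DQeps n m q sigma ii s j.+1) false b)))).
rewrite big_add1 /= big_mkord; apply: eq_bigr => j _.
apply: bsc_min => //; first exact: ltW.
apply: eps_bnd; have := ltn_ord j; lia.
Qed.

Lemma telesc_pe l : (1 <= l <= n.+1)%N ->
  \sum_(1 <= j < l) DQp n m q ii s j * DQeps n m q sigma ii s j = Lam (posp l) - Lam (posp 1).
Proof.
move=> /andP [l1 ln]; rewrite -(@telescope_sumr _ 1 l (fun j => Lam (posp j)) l1) big_nat [RHS]big_nat; apply: eq_bigr => j /andP [j1 jl].
rewrite block ?DQp_eq ?j1 /=; try lia. ring.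
Qed.

Lemma telesc_p l t : (1 <= l <= n.+1)%N ->
  \sum_(l <= j < n.+1) DQp n m q ii s j * t = t * (1 - posp l).
Proof.
move=> /andP [l1 ln].
have -> : t * (1 - posp l) = t * (posp n.+1 - posp l) by rewrite posn1.
rewrite -(@telescope_sumr _ l n.+1 posp ln) mulr_sumr big_nat [RHS]big_nat; apply: eq_bigr => j /andP [j1 jl].
rewrite DQp_eq; [ring | lia].
Qed.

Lemma Kup l t : (1 <= l <= n.+1)%N -> 0 <= t <= 1/2 ->
  Kf (DQ n m q sigma ii s) t <= Lam (posp l) - Lam (posp 1) + t * (1 - posp l).
Proof.
move=> hl ht; rewrite K_DQ //.
have /andP [l1 ln] := hl.
rewrite (big_cat_nat _ (n:=l)) //= -telesc_pe // -(telesc_p t hl).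
apply: lerD; apply: ler_sum_nat => j hj; apply: ler_wpM2l.
- apply: ltW; apply: ppos; lia.
- by rewrite ge_min lexx.
- apply: ltW; apply: ppos; lia.
- by rewrite ge_min lexx orbT.
Qed.

Lemma Kex j : (1 <= j <= n)%N ->
  Kf (DQ n m q sigma ii s) (DQeps n m q sigma ii s j) =
  Lam (posp j.+1) - Lam (posp 1) + DQeps n m q sigma ii s j * (1 - posp j.+1).
Proof.
move=> hj; rewrite K_DQ; last exact: eps_bnd.
have hl : (1 <= j.+1 <= n.+1)%N by lia.
rewrite (big_cat_nat _ (n:=j.+1)) //=; try lia.
rewrite -telesc_pe // -(telesc_p _ hl).
congr (_ + _); rewrite !big_nat; apply: eq_bigr => i hi; congr (_ * _).
- apply: min_l; apply: eps_mono; lia.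
- apply: min_r; apply: eps_mono; lia.
Qed.
End Pat.
End Part1.
Definition Hlr (R : realType) (e p ep : R) (b : bool) : R :=
  if p * bsc ep false b * (1 - e) == p * bsc ep true b * e
  then (p * bsc ep false b + p * bsc ep true b) / 2 else 0.

Lemma LR_switch (R : realType) (n : nat) (p eps : nat -> R)
  (hP : forall j : 'I_n, 0 < p j.+1) (e : R) :
  LRprofile (@switch R {j : 'I_n | 0 < p j.+1} (fun j => p (val j).+1) (fun j => eps (val j).+1)) e
  = \sum_(j < n) (Hlr e (p j.+1) (eps j.+1) true + Hlr e (p j.+1) (eps j.+1) false).
Proof.
rewrite /LRprofile big_mkcond /=.
exact: (sum_sig_bool hP (fun j b => Hlr e (p j.+1) (eps j.+1) b)).
Qed.

Section Main.
Variable R : realType.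
Variables (m : nat) (q sigma : nat -> R).
Hypothesis m_gt0 : (0 < m)%N.
Hypothesis qpos : forall i, (1 <= i <= m)%N -> 0 < q i.
Hypothesis qsum : \sum_(i < m) q i.+1 = 1.
Hypothesis sinc : forall i, (1 <= i < m)%N -> sigma i < sigma i.+1.

Lemma combi (n : nat) (c c' : nat -> R) :
  (forall l, (1 <= l <= n)%N -> c l < c l.+1) ->
  (forall l, (1 <= l <= n)%N -> c' l < c' l.+1) ->
  c 1%N = c' 1%N -> c n.+1 = c' n.+1 ->
  (forall l j, (1 <= l <= n.+1)%N -> (1 <= j <= n)%N -> c' j < c l -> c l < c' j.+1 ->
     exists a, (1 <= a <= m)%N /\ c' j = Cq m q a.-1 /\ c' j.+1 = Cq m q a) ->
  (forall l a, (1 <= l <= n)%N -> (1 <= a <= m)%N -> Cq m q a.-1 <= c l -> c l.+1 <= Cq m q a ->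
     c l = Cq m q a.-1 /\ c l.+1 = Cq m q a) ->
  (forall k, (2 <= k)%N -> (k.+2 <= n)%N -> c k != c' k -> c k.+1 != c' k.+1 -> c k.+2 = c' k.+2) ->
  forall l, (1 <= l <= n.+1)%N -> c l = c' l.
Proof.
move=> hinc hinc' e1 en D B J l hl.
apply/eqP; apply/negPn/negP => hne.
have ex : exists k, (1 <= k <= n.+1)%N && (c k != c' k) by exists l; rewrite hl hne.
case: (ex_minnP ex) => k /andP [hk ck] kmin.
have k1 : k != 1%N by apply/eqP => E; rewrite E e1 eqxx in ck.
have kn : k != n.+1 by apply/eqP => E; rewrite E en eqxx in ck.
have k2 : (2 <= k <= n)%N by lia.
have prev : c k.-1 = c' k.-1.
  apply/eqP; apply/negPn/negP => h.
  have := kmin k.-1; rewrite h andbT => /(_ ltac:(lia)); lia.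
have HK1 : c' k.+1 < c k.+1 -> False.
  move=> lt.
  have k1n : (k.+1 <= n)%N.
    case: (leqP k.+1 n) => // nk; have E : k.+1 = n.+1 by lia.
    rewrite E en in lt; lra.
  have nk : c k.+1 != c' k.+1 by rewrite gt_eqF.
  have e2 : c k.+2 = c' k.+2.
    have [E|E] := eqVneq k.+2 n.+1; first by rewrite E.
    apply: J => //; lia.
  have lt2 : c k.+1 < c' k.+2 by rewrite -e2; apply: hinc; lia.
  have [b [hb [eb1 eb2]]] := D k.+1 k.+1 ltac:(lia) ltac:(lia) lt lt2.
  have [f1 _] := B k.+1 b ltac:(lia) hb ltac:(rewrite -eb1; exact: ltW lt) ltac:(rewrite e2 eb2 //).
  rewrite f1 -eb1 in lt; lra.
case: (ltgtP (c k) (c' k)) => hck; last by rewrite hck eqxx in ck.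
- have pk : k.-1.+1 = k by lia.
  have lt0 : c' k.-1 < c k by rewrite -prev; have := hinc k.-1 ltac:(lia); rewrite pk.
  have lt1 : c k < c' k.-1.+1 by rewrite pk.
  have [a [ha [ea1 ea2]]] := D k k.-1 ltac:(lia) ltac:(lia) lt0 lt1.
  rewrite pk in ea2.
  have h1 : Cq m q a.-1 <= c k.-1 by rewrite prev ea1.
  have h2 : c k.-1.+1 <= Cq m q a by rewrite pk -ea2; exact: ltW hck.
  have [_ f2] := B k.-1 a ltac:(lia) ha h1 h2.
  rewrite pk in f2; rewrite f2 ea2 in hck; lra.
- case: (ltP (c k) (c' k.+1)) => h2.
    have [a [ha [ea1 ea2]]] := D k k ltac:(lia) ltac:(lia) hck h2.
    case: (leP (c k.+1) (Cq m q a)) => h3.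
      have [f1 _] := B k a ltac:(lia) ha ltac:(rewrite -ea1; exact: ltW hck) h3.
      rewrite f1 -ea1 in hck; lra.
    apply: HK1; rewrite ea2; exact: h3.
  apply: HK1; have := hinc k ltac:(lia); lra.
Qed.

End Main.

Lemma count3 (P : pred nat) n k : (count P (iota 2 n.-1) <= 2)%N -> (2 <= k)%N -> (k.+2 <= n)%N ->
  P k -> P k.+1 -> P k.+2 -> False.
Proof.
move=> hc k2 kn p0 p1 p2.
have E : n.-1 = ((k - 2) + (3 + (n - k - 2)))%N by lia.
rewrite E !iotaD !count_cat in hc.
have e2 : (2 + (k - 2) = k)%N by lia.
rewrite e2 /= p0 p1 p2 in hc; lia.
Qed.

Section Two.
Variable R : realType.
Variables (m : nat) (q sigma : nat -> R).
Hypothesis m_gt0 : (0 < m)%N.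
Hypothesis qpos : forall i, (1 <= i <= m)%N -> 0 < q i.
Hypothesis qsum : \sum_(i < m) q i.+1 = 1.
Hypothesis sinc : forall i, (1 <= i < m)%N -> sigma i < sigma i.+1.
Variables (n : nat) (ii ii' : nat -> nat) (s s' : nat -> R).
Hypothesis n2 : (2 <= n)%N.
Hypothesis nm : (n < m)%N.
Hypothesis pok : pattern_ok n m q ii s.
Hypothesis pok' : pattern_ok n m q ii' s'.
Hypothesis pst : isPstar n m q sigma ii s.
Hypothesis pst' : isPstar n m q sigma ii' s'.
Hypothesis hdeg : degr (DQ n m q sigma ii s) (DQ n m q sigma ii' s').
Hypothesis hcnt : (count (fun j => (ii j != ii' j) || (s j != s' j)) (iota 2 n.-1) <= 2)%N.

Lemma Dpat l j : (1 <= l <= n.+1)%N -> (1 <= j <= n)%N ->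
  posp m q n ii' s' j < posp m q n ii s l -> posp m q n ii s l < posp m q n ii' s' j.+1 ->
  exists a, (1 <= a <= m)%N /\ posp m q n ii' s' j = Cq m q a.-1 /\ posp m q n ii' s' j.+1 = Cq m q a.
Proof.
move=> hl hj h1 h2.
have ht := eps_bnd m_gt0 n2 nm pst' hj.
have ht1 : 0 <= DQeps n m q sigma ii' s' j <= 1.
  move/andP: ht => [a b]; apply/andP; split; lra.
have K1 := degr_K ht1 hdeg.
rewrite (Kex m_gt0 qpos qsum n2 nm pok' pst' hj) in K1.
have K2 := Kup m_gt0 qpos qsum n2 nm pok pst hl ht.
have P1 : posp m q n ii s 1 = posp m q n ii' s' 1 by rewrite !pos1.
have Bl := block m_gt0 qpos qsum n2 nm pok' pst' hj.
have hj1 : (1 <= j <= n.+1)%N by lia.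
have hj2 : (1 <= j.+1 <= n.+1)%N by lia.
have /andP [x0 _] := pos01 m_gt0 qpos qsum n2 nm pok' hj1.
have /andP [_ z1] := pos01 m_gt0 qpos qsum n2 nm pok' hj2.
move: K1 K2 P1 Bl x0 z1 h1 h2.
set t := DQeps n m q sigma ii' s' j.
set x := posp m q n ii' s' j; set y := posp m q n ii s l; set z := posp m q n ii' s' j.+1.
move=> K1 K2 P1 Bl x0 z1 h1 h2.
rewrite P1 in K2.
have F2 : Lam m q sigma z - Lam m q sigma y <= t * (z - y) by lra.
have H : (Lam m q sigma z - Lam m q sigma y) * (y - x) <= (Lam m q sigma y - Lam m q sigma x) * (z - y).
  have p1 : 0 < y - x by lra.
  have p2 : 0 < z - y by lra.
  have A1 : (Lam m q sigma z - Lam m q sigma y) * (y - x) <= t * (z - y) * (y - x) by rewrite ler_pM2r.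
  have A2 : t * (y - x) * (z - y) <= (Lam m q sigma y - Lam m q sigma x) * (z - y) by rewrite ler_pM2r //; lra.
  have E : t * (z - y) * (y - x) = t * (y - x) * (z - y) by ring.
  lra.
have [a [ha [xa za]]] := AVG m_gt0 qpos qsum sinc x0 h1 h2 z1 H.
have [f1 f2] := Bblock m_gt0 qpos qsum n2 nm pok' pst' hj ha xa za.
by exists a.
Qed.

Lemma pos_eq j : (2 <= j <= n)%N -> ii j = ii' j -> s j = s' j ->
  posp m q n ii s j = posp m q n ii' s' j.
Proof.
move=> hj e1 e2; rewrite /posp (iemid m_gt0 ii n2 nm hj) (iemid m_gt0 ii' n2 nm hj).
by rewrite (semid m_gt0 s n2 nm hj) (semid m_gt0 s' n2 nm hj) e1 e2.
Qed.

Lemma diffP j : (2 <= j <= n)%N -> posp m q n ii s j != posp m q n ii' s' j ->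
  (ii j != ii' j) || (s j != s' j).
Proof.
move=> hj H; apply/negPn/negP; rewrite negb_or !negbK => /andP [/eqP e1 /eqP e2].
by rewrite (pos_eq hj e1 e2) eqxx in H.
Qed.

Lemma all_pos_eq l : (1 <= l <= n.+1)%N -> posp m q n ii s l = posp m q n ii' s' l.
Proof.
have H1 : forall k, (1 <= k <= n)%N -> posp m q n ii s k < posp m q n ii s k.+1.
  move=> k hk; exact: (pos_inc m_gt0 n2 nm pok pst hk).
have H2 : forall k, (1 <= k <= n)%N -> posp m q n ii' s' k < posp m q n ii' s' k.+1.
  move=> k hk; exact: (pos_inc m_gt0 n2 nm pok' pst' hk).
have H3 : posp m q n ii s 1 = posp m q n ii' s' 1 by rewrite !pos1.
have H4 : posp m q n ii s n.+1 = posp m q n ii' s' n.+1.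
  by rewrite (posn1 m_gt0 qsum ii s n2 nm) (posn1 m_gt0 qsum ii' s' n2 nm).
have H6 : forall k a, (1 <= k <= n)%N -> (1 <= a <= m)%N -> Cq m q a.-1 <= posp m q n ii s k ->
     posp m q n ii s k.+1 <= Cq m q a -> posp m q n ii s k = Cq m q a.-1 /\ posp m q n ii s k.+1 = Cq m q a.
  move=> k a hk ha h1 h2; exact: (Bblock m_gt0 qpos qsum n2 nm pok pst hk ha h1 h2).
have H7 : forall k, (2 <= k)%N -> (k.+2 <= n)%N -> posp m q n ii s k != posp m q n ii' s' k ->
    posp m q n ii s k.+1 != posp m q n ii' s' k.+1 -> posp m q n ii s k.+2 = posp m q n ii' s' k.+2.
  move=> k k2 kn h0 h1; apply/eqP; apply/negPn/negP => h2.
  apply: (count3 hcnt k2 kn); apply: diffP => //; lia.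
move=> hl; exact: (combi m_gt0 H1 H2 H3 H4 Dpat H6 H7 hl).
Qed.

Lemma final_cong : cong (DQ n m q sigma ii s) (DQ n m q sigma ii' s').
Proof.
move=> e _; rewrite /DQ.
have hP : forall j : 'I_n, 0 < DQp n m q ii s j.+1 by move=> j; apply: (ppos pst); have := ltn_ord j; lia.
have hP' : forall j : 'I_n, 0 < DQp n m q ii' s' j.+1 by move=> j; apply: (ppos pst'); have := ltn_ord j; lia.
rewrite (@LR_switch R n (DQp n m q ii s) (DQeps n m q sigma ii s) hP e).
rewrite (@LR_switch R n (DQp n m q ii' s') (DQeps n m q sigma ii' s') hP' e).
apply: eq_bigr => j _.
have hj : (1 <= j.+1 <= n)%N by have := ltn_ord j; lia.
have E1 := all_pos_eq (l:=j.+1) ltac:(lia).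
have E2 := all_pos_eq (l:=j.+2) ltac:(lia).
have Ep : DQp n m q ii s j.+1 = DQp n m q ii' s' j.+1.
  by rewrite (DQp_eq m_gt0 n2 nm pok hj) (DQp_eq m_gt0 n2 nm pok' hj) E1 E2.
have Ee : DQeps n m q sigma ii s j.+1 = DQeps n m q sigma ii' s' j.+1.
  rewrite /DQeps Ep (DQpe_eq sigma m_gt0 qpos qsum n2 nm pok hj) (DQpe_eq sigma m_gt0 qpos qsum n2 nm pok' hj).
  by rewrite E1 E2.
by rewrite Ep Ee.
Qed.

End Two.

Unset Implicit Arguments.

Theorem theorem4 (R : realType) (n m : nat) (q sigma : nat -> R)
  (ii ii' : nat -> nat) (s s' : nat -> R) :
  (2 <= n)%N -> (n < m)%N ->
  (forall i, (1 <= i <= m)%N -> 0 < q i) ->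
  \sum_(i < m) q i.+1 = 1 ->
  0 <= sigma 1%N ->
  (forall i, (1 <= i < m)%N -> sigma i < sigma i.+1) ->
  sigma m <= 1 / 2 ->
  inBstar m (Qchan m q sigma) ->
  pattern_ok n m q ii s -> pattern_ok n m q ii' s' ->
  isPstar n m q sigma ii s -> isPstar n m q sigma ii' s' ->
  (count (fun j => (ii j != ii' j) || (s j != s' j)) (iota 2 n.-1) <= 2)%N ->
  degr (DQ n m q sigma ii s) (DQ n m q sigma ii' s') ->
  cong (DQ n m q sigma ii s) (DQ n m q sigma ii' s').
Proof.
move=> n2 nm qpos qsum s0 sinc sm Qst pok pok' pst pst' hcnt hdeg.
have m_gt0 : (0 < m)%N by apply: leq_ltn_trans nm.
exact: (final_cong m_gt0 qpos qsum sinc n2 nm pok pok' pst pst' hdeg hcnt).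
Qed.
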